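(* Let $m\ge 3$ and $\theta_c(\mathrm{TR},m)=\frac{m-3}{5m-3}$. For $\theta\in(0,1]$: (i) if $\theta<\theta_c(\mathrm{TR},m)$ then $\lim_{n\to\infty}\rho(\mathrm{TR},m,n,\theta)=1$; (ii) if $\theta>\theta_c(\mathrm{TR},m)$ then $\lim_{n\to\infty}\rho(\mathrm{TR},m,n,\theta)=0$.
   Context: A ranking is a strict total order on the candidates. A discrete profile $P$ consists of candidates, $n$ voters and a ranking $P_v$ per voter. For a set $K$ of candidates, $P_K$ is the profile obtained by restricting each ranking to $K$. Plurality score $s_{\mathrm{Plu}}(c,P)$: number (weight) of voters ranking $c$ first. Two-Round System ($\mathrm{TR}$): the two candidates with the highest Plurality scores in $P$ form a set $K$; the winner is the candidate of $K$ with the higher Plurality score in $P_K$; ties broken by an arbitrary fixed tie-breaking rule (the result holds for any such rule). CM: a rule $f$ is coalitionally manipulable in a discrete profile $P$ if there is a discrete $Q$ with the same candidates and voters such that $f(Q)\ne f(P)$ and every voter $v$ with $Q_v\ne P_v$ prefers $f(Q)$ to $f(P)$ according to $P_v$. Perturbed Culture ($m,n\ge1$, $\theta\in(0,1]$): random discrete profile with candidates $\{1,\dots,m\}$, voters $\{1,\dots,n\}$, each voter independently having ranking $1\succ 2\succ\cdots\succ m$ with probability $\theta$ and a uniformly random ranking with probability $1-\theta$. $\rho(f,m,n,\theta)$ is the probability that $f$ is CM in the random profile. *)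

(* Defs.v *)
From HB Require Import structures.
From mathcomp Require Import all_boot all_order all_algebra all_fingroup.
From mathcomp Require Import all_classical all_reals all_analysis.
Set Implicit Arguments. Unset Strict Implicit. Unset Printing Implicit Defensive.
Import Order.TTheory GRing.Theory Num.Theory.

(* Candidates are 'I_m (candidate c stands for the paper's candidate c+1),
   voters are 'I_n.  A ranking is a permutation r : {perm 'I_m}, read as
   r c = position of candidate c (0 = top). *)

Definition ranking (m : nat) := {perm 'I_m}.
Definition profile (m n : nat) := {ffun 'I_n -> ranking m}.

Definition prefers (m : nat) (r : ranking m) (a b : 'I_m) : bool := (r a < r b)%N.

Definition first_in (m : nat) (K : {set 'I_m}) (r : ranking m) (c : 'I_m) : bool :=
  (c \in K) && [forall d in K, (d != c) ==> prefers r c d].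

Definition plu (m n : nat) (K : {set 'I_m}) (P : profile m n) (c : 'I_m) : nat :=
  #|[set v : 'I_n | first_in K (P v) c]|.

(* Tie-breaking rule: a fixed strict total order on candidates, given by a
   permutation tb (tb a < tb b means a wins ties against b).
   [beats s tb a b]: a is ranked above b by score s, ties broken by tb. *)
Definition beats (m : nat) (s : 'I_m -> nat) (tb : {perm 'I_m}) (a b : 'I_m) : bool :=
  (s b < s a)%N || ((s a == s b) && (tb a < tb b)%N).

Definition TR_finalists (m n : nat) (tb : {perm 'I_m}) (P : profile m n) : {set 'I_m} :=
  [set c | (#|[set d | beats (plu [set: 'I_m]%SET P) tb d c]| < 2)%N].

Definition TR_winner (m n : nat) (tb : {perm 'I_m}) (P : profile m n) (c : 'I_m) : bool :=
  let K := TR_finalists tb P in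
  (c \in K) && [forall d in K, (d != c) ==> beats (plu K P) tb c d].

(* The Two-Round System as a function (Some winner; None only when m = 0). *)
Definition TR (m n : nat) (tb : {perm 'I_m}) (P : profile m n) : option 'I_m :=
  [pick c | TR_winner tb P c].

Definition TR_CM (m n : nat) (tb : {perm 'I_m}) (P : profile m n) : bool :=
  [exists Q : profile m n,
    match TR tb P, TR tb Q with
    | Some w, Some w' =>
        (w' != w) && [forall v : 'I_n, (Q v != P v) ==> prefers (P v) w' w]
    | _, _ => false
    end].

(* Perturbed Culture: probability of ranking r (reference ranking 1 > 2 > ... > m
   is the identity permutation). *)
Definition pc_prob (R : realType) (m : nat) (theta : R) (r : ranking m) : R :=
  (theta * (r == 1%g)%:R + (1 - theta) / (m`!)%:R)%R.

Definition rho_TR (R : realType) (m n : nat) (tb : {perm 'I_m}) (theta : R) : R :=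
  (\sum_(P : profile m n | TR_CM tb P) \prod_(v : 'I_n) pc_prob theta (P v))%R.

Definition theta_c_TR (R : realType) (m : nat) : R :=
  ((m%:R - 3) / (5 * m%:R - 3))%R.

(* Main.v *)
Require Import Defs.
From HB Require Import structures.
From mathcomp Require Import all_boot all_order all_algebra all_fingroup.
From mathcomp Require Import all_classical all_reals all_analysis.
Import Order.TTheory GRing.Theory Num.Theory.
Import numFieldNormedType.Exports.
From mathcomp Require Import fintype finset.
From mathcomp Require Import ring lra zify.
Set Implicit Arguments. Unset Strict Implicit. Unset Printing Implicit Defensive.

Lemma beats_irr m (s : 'I_m -> nat) tb a : ~~ beats s tb a a.
Proof. by rewrite /beats ltnn eqxx ltnn. Qed.

Lemma beats_asym m (s : 'I_m -> nat) tb a b : beats s tb a b -> ~~ beats s tb b a.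
Proof.
rewrite /beats; case/orP=> [H|/andP[/eqP E H]].
  apply/negP; case/orP; [lia| case/andP=> /eqP; lia].
by rewrite E ltnn eqxx /= -leqNgt ltnW.
Qed.

Lemma beats_total m (s : 'I_m -> nat) tb a b : a != b -> beats s tb a b || beats s tb b a.
Proof.
move=> ab; rewrite /beats.
have tbab : (tb a : nat) != tb b.
  by apply/negP=> /eqP/val_inj/perm_inj E; rewrite E eqxx in ab.
case: (ltngtP (s a) (s b)) => H; rewrite ?H ?orbT //=.
by move: tbab; case: (ltngtP (tb a) (tb b)) => //.
Qed.

Lemma beats_trans m (s : 'I_m -> nat) tb a b c :
  beats s tb a b -> beats s tb b c -> beats s tb a c.
Proof.
rewrite /beats => /orP[H1|/andP[/eqP E1 H1]] /orP[H2|/andP[/eqP E2 H2]].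
- by rewrite (ltn_trans H2 H1).
- by rewrite -E2 H1.
- by rewrite E1 H2.
- by rewrite E1 E2 eqxx (ltn_trans H1 H2) orbT.
Qed.

Lemma beats_le m (s : 'I_m -> nat) tb a b : beats s tb a b -> (s b <= s a)%N.
Proof. by rewrite /beats => /orP[/ltnW|/andP[/eqP -> _]]. Qed.

Lemma gt_beats m (s : 'I_m -> nat) tb a b : (s b < s a)%N -> beats s tb a b.
Proof. by rewrite /beats => ->. Qed.

Definition fsl m (s : 'I_m -> nat) (tb : {perm 'I_m}) : {set 'I_m} :=
  [set c | (#|[set d | beats s tb d c]| < 2)%N].

Lemma fsl_two m (s : 'I_m -> nat) tb c d1 d2 :
  d1 != d2 -> beats s tb d1 c -> beats s tb d2 c -> c \notin fsl s tb.
Proof.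
move=> d12 h1 h2; rewrite inE -leqNgt.
have -> : 2 = #|[set d1; d2]| by rewrite cards2 d12.
by apply: subset_leq_card; apply/subsetP=> x; rewrite !inE => /orP[]/eqP->; rewrite ?h1 ?h2.
Qed.

Lemma fsl3 m (s : 'I_m -> nat) tb a b c :
  a \in fsl s tb -> b \in fsl s tb -> c \in fsl s tb ->
  a != b -> b != c -> a != c -> False.
Proof.
move=> ha hb hc ab bc ac.
have Tab := beats_total s tb ab; have Tbc := beats_total s tb bc;
have Tac := beats_total s tb ac.
have ba : b != a by rewrite eq_sym. have cb : c != b by rewrite eq_sym.
have ca : c != a by rewrite eq_sym.
case/orP: Tab => Hab; case/orP: Tbc => Hbc; case/orP: Tac => Hac.
- by move: (fsl_two ab Hac Hbc); rewrite hc.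
- by move: (beats_asym Hac); rewrite (beats_trans Hab Hbc).
- by move: (fsl_two ac Hab Hbc); rewrite hb.
- by move: (fsl_two ac Hab Hbc); rewrite hb.
- by move: (fsl_two ab Hac Hbc); rewrite hc.
- by move: (fsl_two bc Hab Hac); rewrite ha.
- by move: (beats_asym Hac); rewrite (beats_trans Hbc Hab).
- by move: (fsl_two bc Hab Hac); rewrite ha.
Qed.

Lemma first_setT m (r : ranking m) c : first_in [set: 'I_m] r c = ((r c : nat) == 0%N).
Proof.
rewrite /first_in in_setT /=; apply/idP/idP.
  move=> /forallP H; apply/negPn/negP => nz.
  have m0 : (0 < m)%N by apply: leq_ltn_trans (leq0n c) (ltn_ord c).
  pose o := Ordinal m0; pose d := ((r^-1)%g o).
  have rd : r d = o by rewrite /d permKV.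
  have dc : d != c by apply/negP=> /eqP E; move: nz; rewrite -E rd.
  by move: (H d); rewrite in_setT dc /= /prefers rd /= ltn0.
move=> /eqP rc; apply/forallP=> d; apply/implyP=> _; apply/implyP=> dc.
rewrite /prefers rc lt0n; apply/negP=> /eqP rd.
have : r d = r c by apply: val_inj; rewrite /= rd rc.
by move/perm_inj => E; rewrite E eqxx in dc.
Qed.

Lemma first_pair m (K : {set 'I_m}) (r : ranking m) a b :
  a \in K -> b \in K -> a != b -> (forall e, e \in K -> e = a \/ e = b) ->
  first_in K r a = (r a < r b)%N.
Proof.
move=> aK bK ab HK; rewrite /first_in aK /=; apply/idP/idP.
  by move/forallP/(_ b); rewrite bK eq_sym ab.
move=> H; apply/forallP=> d; apply/implyP=> dK; apply/implyP=> da.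
by case: (HK d dK) => E; [rewrite E eqxx in da | rewrite E].
Qed.

Lemma fin_pair m n tb (P : profile m n) a b :
  a \in TR_finalists tb P -> b \in TR_finalists tb P -> a != b ->
  forall e, e \in TR_finalists tb P -> e = a \/ e = b.
Proof.
move=> ha hb ab e he.
case: (eqVneq e a) => [->|ea]; first by left.
case: (eqVneq e b) => [->|eb]; first by right.
exfalso; apply: (@fsl3 m _ tb a b e ha hb he ab); by rewrite eq_sym.
Qed.

Lemma TR_winner_uniq m n tb (P : profile m n) a b :
  TR_winner tb P a -> TR_winner tb P b -> a = b.
Proof.
move=> /andP[aK /forallP Ha] /andP[bK /forallP Hb].
apply/eqP/negPn/negP=> ab.
move: (Ha b) (Hb a); rewrite aK bK eq_sym ab /= => h1 h2.
by move: (beats_asym h1); rewrite h2.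
Qed.

Lemma TR_some m n tb (P : profile m n) a : TR_winner tb P a -> TR tb P = Some a.
Proof.
move=> Ha; rewrite /TR; case: pickP => [b Hb|H]; last by move: (H a); rewrite Ha.
by rewrite (TR_winner_uniq Hb Ha).
Qed.

Lemma TR_some_inv m n tb (P : profile m n) a : TR tb P = Some a -> TR_winner tb P a.
Proof. by rewrite /TR; case: pickP => // b Hb [<-]. Qed.

Definition cnt m n (P : profile m n) (E : {set ranking m}) : nat :=
  #|[set v : 'I_n | P v \in E]|.

Definition sF m (c : 'I_m) : {set ranking m} := [set r : ranking m | (r c : nat) == 0%N].
Definition sL m (a b : 'I_m) : {set ranking m} := [set r : ranking m | (r a < r b)%N].
Definition sN m (y o w : 'I_m) : {set ranking m} :=
  [set r : ranking m | ((r y : nat) == 0%N) && (r o < r w)%N].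

Lemma plu_setT m n (P : profile m n) c : plu [set: 'I_m] P c = cnt P (sF c).
Proof. by rewrite /plu /cnt; apply: eq_card => v; rewrite !inE first_setT. Qed.

Lemma perm_neq m (r : ranking m) a b : a != b -> (r a : nat) != r b.
Proof. by move=> ab; apply/negP=> /eqP/val_inj/perm_inj E; rewrite E eqxx in ab. Qed.

Lemma TR_P m n tb (P : profile m n) o :
  (forall c, c != o -> cnt P (sF c) < cnt P (sF o))%N ->
  (forall b, b != o -> cnt P (sL b o) < cnt P (sL o b))%N ->
  TR tb P = Some o.
Proof.
move=> H1 H2; apply: TR_some.
have oK : o \in TR_finalists tb P.
  rewrite /TR_finalists inE.
  suff -> : [set d | beats (plu [set: 'I_m] P) tb d o] = set0 by rewrite cards0.
  apply/setP=> d; rewrite !inE; apply/negP=> Hd.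
  case: (eqVneq d o) => [E|dn]; first by move: (beats_irr (plu [set: 'I_m] P) tb o); rewrite -{1}E Hd.
  by move: (beats_le Hd); rewrite !plu_setT leqNgt H1.
rewrite /TR_winner oK /=; apply/forallP=> d; apply/implyP=> dK; apply/implyP=> dn.
have od : o != d by rewrite eq_sym.
have Kp := fin_pair oK dK od.
apply: gt_beats.
have e1 : plu (TR_finalists tb P) P o = cnt P (sL o d).
  by rewrite /plu /cnt; apply: eq_card => v; rewrite !inE (first_pair _ oK dK od Kp).
have e2 : plu (TR_finalists tb P) P d = cnt P (sL d o).
  rewrite /plu /cnt; apply: eq_card => v; rewrite !inE (first_pair _ dK oK dn) //.
  by move=> e eK; case: (Kp e eK); [right|left].
by rewrite e1 e2 H2.
Qed.

Lemma cnt_sub m n (P : profile m n) (S : {set 'I_n}) (E : {set ranking m}) :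
  (forall v, v \in S -> P v \in E) -> (#|S| <= cnt P E)%N.
Proof. move=> H; apply: subset_leq_card; apply/subsetP=> v vS; rewrite inE; exact: H. Qed.

Lemma notCM m n tb (P : profile m n) o :
  (forall c, c != o -> cnt P (sF c) < cnt P (sF o))%N ->
  (forall b, b != o -> cnt P (sL b o) < cnt P (sL o b))%N ->
  (forall w y, w != o -> y != o -> y != w ->
     cnt P (sL w o) + cnt P (sN y o w) < 2 * cnt P (sF o))%N ->
  ~~ TR_CM tb P.
Proof.
move=> H1 H2 H3; rewrite /TR_CM (TR_P tb H1 H2); apply/existsP=> [[Q]].
case TQ: (TR tb Q) => [w|] //; case/andP=> wo /forallP Hch.
have Hc v : Q v != P v -> (P v w < P v o)%N by move/implyP: (Hch v).
have Hu v : (P v o < P v w)%N -> Q v = P v.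
  move=> h; apply/eqP/negPn/negP=> /Hc h'; move: (ltn_trans h h'); by rewrite ltnn.
case/andP: (TR_some_inv TQ) => wK /forallP Hw.
case: (boolP (o \in TR_finalists tb Q)) => oK.
  have ow : o != w by rewrite eq_sym.
  have Kp := fin_pair wK oK wo.
  move: (Hw o); rewrite oK ow /= => /beats_le.
  have e1 : plu (TR_finalists tb Q) Q w = #|[set v | (Q v w < Q v o)%N]|.
    by apply: eq_card => v; rewrite !inE (first_pair _ wK oK wo Kp).
  have e2 : plu (TR_finalists tb Q) Q o = #|[set v | (Q v o < Q v w)%N]|.
    apply: eq_card => v; rewrite !inE (first_pair _ oK wK ow) //.
    by move=> e eK; case: (Kp e eK); [right|left].
  rewrite e1 e2 => Hle.
  have a1 : (cnt P (sL o w) <= #|[set v | (Q v o < Q v w)%N]|)%N.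
    apply: subset_leq_card; apply/subsetP=> v; rewrite !inE => h.
    by rewrite (Hu v h).
  have a2 : (#|[set v | (Q v w < Q v o)%N]| <= cnt P (sL w o))%N.
    apply: cnt_sub => v; rewrite !inE => h.
    case: (eqVneq (Q v) (P v)) => [E|/Hc //]; by rewrite -E.
  by move: (H2 w wo); rewrite ltnNge (leq_trans a1 (leq_trans Hle a2)).
move: oK; rewrite /TR_finalists inE -leqNgt => /card_gt1P [y1 [y2 [hy1 hy2 y12]]].
move: hy1 hy2; rewrite !inE => b1 b2.
have bw : beats (plu [set: 'I_m] Q) tb w o.
  case/orP: (beats_total (plu [set: 'I_m] Q) tb wo) => // bow.
  move: wK; rewrite /TR_finalists inE.
  by have := fsl_two y12 (beats_trans b1 bow) (beats_trans b2 bow); rewrite inE => /negbTE ->.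
have [y [hyb yw]] : exists y, beats (plu [set: 'I_m] Q) tb y o /\ y != w.
  case: (eqVneq y1 w) => [E|h]; last by exists y1.
  by exists y2; split=> //; rewrite -E eq_sym.
have yo : y != o by apply/negP=> /eqP E; move: (beats_irr (plu [set: 'I_m] Q) tb o); rewrite -{1}E hyb.
move: (beats_le bw) (beats_le hyb); rewrite !plu_setT => l1 l2.
have a0 : (cnt P (sF o) <= cnt Q (sF o))%N.
  apply: subset_leq_card; apply/subsetP=> v; rewrite !inE => h.
  have -> : Q v = P v.
    apply/eqP/negPn/negP=> /Hc; by rewrite (eqP h) ltn0.
  by [].
have a3 : (cnt Q (sF w) + cnt Q (sF y) <= cnt P (sL w o) + cnt P (sN y o w))%N.
  rewrite /cnt -cardsUI.
  have -> : [set v | Q v \in sF w] :&: [set v | Q v \in sF y] = set0.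
    apply/setP=> v; rewrite !inE; apply/negP=> /andP[/eqP a /eqP b].
    by move: (perm_neq (Q v) yw); rewrite a b.
  rewrite cards0 addn0; apply: leq_trans (leq_card_setU _ _).
  apply: subset_leq_card; apply/subsetP=> v; rewrite !inE.
  case: (eqVneq (Q v) (P v)) => [E|/Hc h]; last by rewrite h.
  rewrite E; case/orP=> /eqP h.
    have : (P v o : nat) != 0%N by rewrite -h perm_neq // eq_sym.
    by rewrite h lt0n => ->.
  rewrite h eqxx /=.
  by case: (ltngtP (P v w) (P v o)) => // /eqP; rewrite (negbTE (perm_neq _ wo)).
move: (H3 w y wo yo yw); rewrite ltnNge mul2n -addnn.
by rewrite (leq_trans (leq_add a0 a0) (leq_trans (leq_add l1 l2) a3)).
Qed.

Lemma sub_card (T : finType) (X : {set T}) k :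
  (k <= #|X|)%N -> exists S : {set T}, S \subset X /\ #|S| = k.
Proof.
elim: k => [|k IH] h; first by exists set0; rewrite sub0set cards0.
case: (IH (ltnW h)) => S [sSX cS].
have : (0 < #|X :\: S|)%N by rewrite cardsD (setIidPr sSX) cS subn_gt0.
case/card_gt0P=> x; rewrite inE => /andP[xS xX].
exists (x |: S); split; first by rewrite subUset sub1set xX.
by rewrite cardsU1 xS cS.
Qed.

Definition sT m (o a b : 'I_m) : {set ranking m} :=
  [set r : ranking m | (r o < r a)%N && (r b < r a)%N].

Lemma pos0 m (r : ranking m) a c : (r a : nat) = 0%N -> ((r c : nat) == 0%N) = (c == a).
Proof.
move=> ha; apply/eqP/eqP => [h|->//]; apply: (@perm_inj _ r); apply: val_inj.
by rewrite /= h ha.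
Qed.

Lemma CM m n (tb : {perm 'I_m}) (P : profile m n) (o a b : 'I_m) :
  (o : nat) = 0%N -> a != o -> b != o -> a != b ->
  (forall c, c != o -> cnt P (sF c) < cnt P (sF o))%N ->
  (forall c, c != o -> cnt P (sL c o) < cnt P (sL o c))%N ->
  (cnt P (sN b o a) <= cnt P (sF o))%N ->
  (forall c, c != a -> c != b -> cnt P (sF c) <= cnt P (sF o))%N ->
  (2 * cnt P (sF o) + 1 < cnt P (sL a o) + cnt P (sN b o a))%N ->
  (2 * (cnt P (sF o) - cnt P (sN b o a) + 1 + cnt P (sT o a b)) < n)%N ->
  TR_CM tb P.
Proof.
move=> o0 ao bo ab H1 H2 Hd He Hc Hf.
have TP := TR_P tb H1 H2.
set A := cnt P (sF o) in H1 Hd He Hc Hf.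
set N := cnt P (sN b o a) in Hd Hc Hf.
set T := cnt P (sT o a b) in Hf.
set Mset := [set v | P v \in sL a o].
have cM : #|Mset| = cnt P (sL a o) by [].
have Mmem v : (v \in Mset) = (P v a < P v o)%N by rewrite inE /sL inE.
clearbody Mset.
set k := (A - N + 1)%N in Hf.
have kM : (k <= #|Mset|)%N by rewrite cM /k; lia.
case: (sub_card kM) => S [sSM cS].
pose Q : profile m n := [ffun v => if v \in S then tperm o b else if v \in Mset then tperm o a else P v].
have QE v : Q v = if v \in S then tperm o b else if v \in Mset then tperm o a else P v by rewrite ffunE.
clearbody Q.
have ba : b != a by rewrite eq_sym.
have ob : o != b by rewrite eq_sym.
have oa : o != a by rewrite eq_sym.
have t1a : ((tperm o a) a : nat) = 0%N by rewrite tpermR.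
have t2b : ((tperm o b) b : nat) = 0%N by rewrite tpermR.
have SM v : v \in S -> v \in Mset by move/(subsetP sSM).
have Sa : (#|Mset| - k <= cnt Q (sF a))%N.
  rewrite -cS -(setIidPr sSM) -cardsD; apply: subset_leq_card; apply/subsetP=> v.
  move=> /setDP [vM vS]; rewrite inE QE (negbTE vS) vM.
  by rewrite /sF ?inE (pos0 _ t1a).
have Sb : (k + N <= cnt Q (sF b))%N.
  rewrite -cS /N /cnt.
  have dis : S :&: [set v | P v \in sN b o a] = set0.
    apply/setP=> v; rewrite !inE; apply/negP=> /andP[/SM]; rewrite Mmem /sN ?inE.
    move=> h1 /andP[_ h2]; move: (ltn_trans h1 h2); by rewrite ltnn.
  rewrite -cardsUI dis cards0 addn0.
  apply: subset_leq_card; apply/subsetP=> v; rewrite !inE QE.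
  case/orP=> [->|]; first by rewrite (pos0 _ t2b).
  rewrite /sN ?inE => /andP[h1 h2]; case: ifP => [_|vS]; first by rewrite (pos0 _ t2b).
  by rewrite Mmem ltnNge (ltnW h2) /=.
have Sc c : c != a -> c != b -> (cnt Q (sF c) <= cnt P (sF c))%N.
  move=> ca cb; apply: subset_leq_card; apply/subsetP=> v; rewrite !inE QE.
  case: ifP => _; first by rewrite (pos0 _ t2b) (negbTE cb).
  by case: ifP => _ //; rewrite (pos0 _ t1a) (negbTE ca).
have pa c : c != a -> c != b -> (plu [set: 'I_m] Q c < plu [set: 'I_m] Q a)%N.
  move=> ca cb; rewrite !plu_setT; move: (Sc c ca cb) (He c ca cb); rewrite cM in Sa; lia.
have pb c : c != a -> c != b -> (plu [set: 'I_m] Q c < plu [set: 'I_m] Q b)%N.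
  move=> ca cb; rewrite !plu_setT; move: (Sc c ca cb) (He c ca cb); lia.
have aK : a \in TR_finalists tb Q.
  rewrite /TR_finalists inE; apply: (@leq_ltn_trans #|[set b]|); last by rewrite cards1.
  apply: subset_leq_card; apply/subsetP=> d; rewrite !inE => hd.
  case: (eqVneq d a) => [E|da]; first by move: (beats_irr (plu [set: 'I_m] Q) tb a); rewrite -{1}E hd.
  apply/negPn/negP=> db; move: (beats_le hd); by rewrite leqNgt pa.
have bK : b \in TR_finalists tb Q.
  rewrite /TR_finalists inE; apply: (@leq_ltn_trans #|[set a]|); last by rewrite cards1.
  apply: subset_leq_card; apply/subsetP=> d; rewrite !inE => hd.
  case: (eqVneq d b) => [E|db]; first by move: (beats_irr (plu [set: 'I_m] Q) tb b); rewrite -{1}E hd.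
  apply/negPn/negP=> da; move: (beats_le hd); by rewrite leqNgt pb.
have Kp := fin_pair aK bK ab.
have W : TR_winner tb Q a.
  rewrite /TR_winner aK /=; apply/forallP=> d; apply/implyP=> dK; apply/implyP=> da.
  case: (Kp d dK) => E; first by rewrite E eqxx in da.
  rewrite E; apply: gt_beats.
  have e1 : plu (TR_finalists tb Q) Q b = #|[set v | (Q v b < Q v a)%N]|.
    apply: eq_card=> v; rewrite !inE (first_pair _ bK aK ba) //.
    by move=> e eK; case: (Kp e eK); [right|left].
  have e2 : plu (TR_finalists tb Q) Q a = #|~: [set v | (Q v b < Q v a)%N]|.
    apply: eq_card=> v; rewrite in_setC !in_set (first_pair _ aK bK ab Kp).
    by case: (ltngtP (Q v a) (Q v b)) => // /eqP; rewrite (negbTE (perm_neq _ ab)).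
  rewrite e1 e2.
  idtac.
  have : (#|[set v | (Q v b < Q v a)%N]| <= k + T)%N.
    rewrite -cS; apply: leq_trans (leq_card_setU _ _).
    apply: subset_leq_card; apply/subsetP=> v; rewrite !inE QE.
    case: ifP => //= _; case: ifP => vM.
      by rewrite tpermR tpermD // ltnNge o0.
    move=> h; rewrite h andbT.
    move: vM; rewrite Mmem; case: (ltngtP (P v a) (P v o)) => // /eqP.
    by rewrite (negbTE (perm_neq _ ao)).
  have := cardsC [set v | (Q v b < Q v a)%N]; rewrite card_ord; lia.
apply/existsP; exists Q; rewrite TP (TR_some W) ao /=.
apply/forallP=> v; apply/implyP; rewrite QE /prefers.
case: ifP => [/SM|_]; first by rewrite Mmem.
by case: ifP => [|_]; [rewrite Mmem | rewrite eqxx].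
Qed.

Lemma card_tau m (tau : {perm 'I_m}) (E : {set ranking m}) :
  #|[set r : ranking m | (tau * r)%g \in E]| = #|E|.
Proof.
rewrite -(card_preimset E (mulgI tau)); apply: eq_card => r; by rewrite !inE.
Qed.

Lemma card_tauE m (tau : {perm 'I_m}) (E F : {set ranking m}) :
  (forall r : ranking m, ((tau * r)%g \in F) = (r \in E)) -> #|E| = #|F|.
Proof.
move=> H; rewrite -(card_tau tau F); apply: eq_card => r; by rewrite !inE H.
Qed.

Lemma card_sF_eq m (c d : 'I_m) : #|sF c| = #|sF d|.
Proof.
apply: (@card_tauE m (tperm c d)) => r; rewrite !inE permM; by rewrite tpermR.
Qed.

Lemma card_sF m (c : 'I_m) : (m * #|sF c| = m`!)%N.
Proof.
have -> : (m * #|sF c| = \sum_(d : 'I_m) #|sF d|)%N.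
  by rewrite (eq_bigr (fun _ => #|sF c|)) ?sum_nat_const ?card_ord // => d _; rewrite (card_sF_eq d c).
rewrite -card_Sn -sum1_card.
have c1 (A : {set ranking m}) : #|A| = (\sum_(r : ranking m) (r \in A : nat))%N.
  by rewrite -sum1_card big_mkcond /=; apply: eq_bigr => r _; case: (r \in A).
rewrite (eq_bigr (fun d => \sum_(r : ranking m) (r \in sF d : nat))%N); last by move=> d _; rewrite c1.
rewrite exchange_big /=; apply: eq_bigr => r _.
have m0 : (0 < m)%N by apply: leq_ltn_trans (leq0n c) (ltn_ord c).
pose x := ((r^-1)%g (Ordinal m0)).
have rx : (r x : nat) = 0%N by rewrite /x permKV.
rewrite (eq_bigr (fun d => (d == x : nat))); last by move=> d _; rewrite /sF inE (pos0 _ rx).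
by rewrite -big_mkcond /= big_pred1_eq.
Qed.

Lemma card_sL m (a b : 'I_m) : a != b -> (2 * #|sL a b| = m`!)%N.
Proof.
move=> ab.
have e1 : #|sL a b| = #|sL b a|.
  apply: (@card_tauE m (tperm a b)) => r; rewrite !inE !permM tpermL tpermR //.
have e2 : sL b a = ~: sL a b.
  apply/setP=> r; rewrite !inE; case: ltngtP => // h; exfalso; move: (perm_neq r ab); by rewrite h eqxx.
by rewrite mul2n -addnn {2}e1 e2 cardsC card_Sn.
Qed.

Lemma card_sN m (y o w : 'I_m) : y != o -> y != w -> o != w ->
  (2 * m * #|sN y o w| = m`!)%N.
Proof.
move=> yo yw ow.
have e1 : #|sN y o w| = #|sN y w o|.
  apply: (@card_tauE m (tperm o w)) => r; rewrite !inE !permM tpermL tpermR tpermD //;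
  by rewrite eq_sym.
have e2 : sN y o w :|: sN y w o = sF y.
  apply/setP=> r; rewrite !inE -andb_orr; case: (_ == _) => //=.
  case: ltngtP => // h; exfalso; move: (perm_neq r ow); by rewrite h eqxx.
have e3 : sN y o w :&: sN y w o = set0.
  apply/setP=> r; rewrite !inE; apply/negP=> /andP[/andP[_ h1] /andP[_ h2]].
  by move: (ltn_trans h1 h2); rewrite ltnn.
have := cardsUI (sN y o w) (sN y w o); rewrite e2 e3 cards0 addn0 -e1 => h.
by rewrite -(card_sF y) h; lia.
Qed.

Definition sMx m (x y z : 'I_m) : {set ranking m} :=
  [set r : ranking m | (r y < r x)%N && (r z < r x)%N].

Lemma sT_sMx m (o a b : 'I_m) : sT o a b = sMx a o b.
Proof. by []. Qed.

Lemma card_sMx m (o a b : 'I_m) : o != a -> a != b -> o != b ->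
  (3 * #|sMx a o b| = m`!)%N.
Proof.
move=> oa ab ob.
have e1 : #|sMx a o b| = #|sMx o a b|.
  apply: (@card_tauE m (tperm a o)) => r; rewrite !inE !permM tpermL tpermR tpermD //;
  by rewrite eq_sym.
have e2 : #|sMx a o b| = #|sMx b o a|.
  apply: (@card_tauE m (tperm a b)) => r; rewrite !inE !permM tpermL tpermR tpermD //.
  by rewrite eq_sym.
  by rewrite eq_sym.
have c1 (A : {set ranking m}) : #|A| = (\sum_(r : ranking m) (r \in A : nat))%N.
  by rewrite -sum1_card big_mkcond /=; apply: eq_bigr => r _; case: (r \in A).
have : (#|sMx a o b| + #|sMx o a b| + #|sMx b o a| = m`!)%N.
  rewrite !c1 -!big_split /= -card_Sn -sum1_card; apply: eq_bigr => r _.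
  rewrite !inE.
  move: (perm_neq r oa) (perm_neq r ab) (perm_neq r ob).
  case: (ltngtP (r o) (r a)); case: (ltngtP (r a) (r b)); case: (ltngtP (r o) (r b)) => //=; lia.
by rewrite -e1 -e2; lia.
Qed.

Local Open Scope ring_scope.

Definition W (R : realFieldType) m n (p : ranking m -> R) (P : profile m n) : R :=
  \prod_(v : 'I_n) p (P v).

Lemma sum_prod_ffun (R : realFieldType) m n (f : 'I_n -> ranking m -> R) :
  \sum_(P : profile m n) \prod_(v : 'I_n) f v (P v) = \prod_(v : 'I_n) \sum_(r : ranking m) f v r.
Proof. by rewrite bigA_distr_bigA. Qed.

Lemma sumW1 (R : realFieldType) m n (p : ranking m -> R) :
  \sum_r p r = 1 -> \sum_(P : profile m n) W p P = 1.
Proof.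
move=> h; rewrite /W (sum_prod_ffun (fun _ => p)) (eq_bigr (fun _ => 1)) ?prodr_const ?expr1n // => v _.
Qed.

Lemma W_ge0 (R : realFieldType) m n (p : ranking m -> R) (P : profile m n) :
  (forall r, 0 <= p r) -> 0 <= W p P.
Proof. by move=> h; apply: prodr_ge0 => v _. Qed.

Lemma two_point (R : realFieldType) m n (p : ranking m -> R) (h : ranking m -> R) (u v : 'I_n) :
  \sum_r p r = 1 -> u != v ->
  \sum_(P : profile m n) W p P * (h (P u) * h (P v)) = (\sum_r p r * h r) * (\sum_r p r * h r).
Proof.
move=> s1 uv.
pose g i r := p r * (if i == u then h r else if i == v then h r else 1).
have vu : v != u by rewrite eq_sym.
transitivity (\sum_(P : profile m n) \prod_i g i (P i)).
  apply: eq_bigr => P _; rewrite /g big_split /=; congr (_ * _).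
  rewrite (bigD1 u) //= eqxx (bigD1 v) //= eqxx (negbTE vu) big1 ?mulr1 // => i /andP[iu iv].
  by rewrite (negbTE iu) (negbTE iv).
have rest : \prod_(i < n | (i != u) && (i != v)) \sum_r g i r = 1.
  apply: big1 => i /andP[iu iv]; rewrite /g (negbTE iu) (negbTE iv).
  by rewrite (eq_bigr p) // => r _; rewrite mulr1.
rewrite (sum_prod_ffun g) (bigD1 u) //= (bigD1 v) //= rest mulr1.
by rewrite /g !eqxx (negbTE vu).
Qed.

Lemma mom2 (R : realFieldType) m n (p : ranking m -> R) (h : ranking m -> R) :
  (forall r, 0 <= p r) -> \sum_r p r = 1 -> \sum_r p r * h r = 0 ->
  (forall r, h r ^+ 2 <= 1) ->
  \sum_(P : profile m n) W p P * (\sum_(v : 'I_n) h (P v)) ^+ 2 <= n%:R.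
Proof.
move=> p0 s1 h0 hb.
have -> : \sum_(P : profile m n) W p P * (\sum_(v : 'I_n) h (P v)) ^+ 2 =
    \sum_(u : 'I_n) \sum_(v : 'I_n) \sum_(P : profile m n) W p P * (h (P u) * h (P v)).
  rewrite (eq_bigr (fun P : profile m n => \sum_(u : 'I_n) \sum_(v : 'I_n) W p P * (h (P u) * h (P v)))); last first.
    move=> P _; rewrite expr2 mulr_suml mulr_sumr; apply: eq_bigr => u _.
    by rewrite mulr_sumr mulr_sumr.
  rewrite exchange_big /=; apply: eq_bigr => u _.
  by rewrite exchange_big.
apply: (@le_trans _ _ (\sum_(u : 'I_n) (1 : R))); last by rewrite sumr_const card_ord.
apply: ler_sum => u _.
rewrite (bigD1 u) //=.
have -> : \sum_(v < n | v != u) \sum_(P : profile m n) W p P * (h (P u) * h (P v)) = 0.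
  by apply: big1 => v vu; rewrite two_point // ?h0 ?mulr0 // eq_sym.
rewrite addr0.
apply: (@le_trans _ _ (\sum_(P : profile m n) W p P)); last by rewrite sumW1.
apply: ler_sum => P _.
rewrite -[X in _ <= X]mulr1; apply: ler_wpM2l; first exact: W_ge0.
by rewrite -expr2 hb.
Qed.

Definition pE (R : realFieldType) m (p : ranking m -> R) (E : {set ranking m}) : R :=
  \sum_(r in E) p r.

Lemma cnt_sum m n (P : profile m n) (E : {set ranking m}) :
  cnt P E = (\sum_(v : 'I_n) (P v \in E : nat))%N.
Proof.
rewrite /cnt -sum1_card big_mkcond /=; apply: eq_bigr => v _; rewrite inE; by case: (P v \in E).
Qed.

Lemma cheb (R : realFieldType) m n (p : ranking m -> R) (E : {set ranking m}) (e : R) :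
  (forall r, 0 <= p r) -> \sum_r p r = 1 -> 0 < e ->
  \sum_(P : profile m n | e <= `|(cnt P E)%:R - n%:R * pE p E|) W p P <= n%:R / e ^+ 2.
Proof.
move=> p0 s1 e0.
pose h r := ((r \in E : nat)%:R - pE p E : R).
have Hx (P : profile m n) : \sum_(v : 'I_n) h (P v) = (cnt P E)%:R - n%:R * pE p E.
  rewrite big_split /= cnt_sum natr_sum sumrN sumr_const card_ord mulr_natl.
  done.
have pE1 : \sum_r p r * (r \in E : nat)%:R = pE p E.
  rewrite /pE [in RHS]big_mkcond /=; apply: eq_bigr => r _.
  by case: (r \in E); rewrite ?mulr1 ?mulr0.
have h0 : \sum_r p r * h r = 0.
  rewrite /h (eq_bigr (fun r => p r * (r \in E : nat)%:R - p r * pE p E)); last by move=> r _; rewrite mulrBr.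
  by rewrite sumrB pE1 -mulr_suml s1 mul1r subrr.
have pEr : 0 <= pE p E <= 1.
  apply/andP; split; first by rewrite /pE; apply: sumr_ge0.
  rewrite -s1 /pE [X in _ <= X](bigID (fun r => r \in E)) /= lerDl.
  by apply: sumr_ge0.
have hb r : h r ^+ 2 <= 1.
  rewrite /h; case: (r \in E) => /=; case/andP: pEr => a b; nra.
have M := mom2 n p0 s1 h0 hb.
apply: (@le_trans _ _ ((\sum_(P : profile m n) W p P * (\sum_(v : 'I_n) h (P v)) ^+ 2) / e ^+ 2)); last first.
  by apply: ler_wpM2r => //; rewrite invr_ge0 exprn_ge0 // ltW.
rewrite mulr_suml big_mkcond /=; apply: ler_sum => P _.
have W0 := W_ge0 P p0.
case: ifP => hP; last by apply: mulr_ge0; [apply: mulr_ge0 => //; exact: sqr_ge0 | rewrite invr_ge0 exprn_ge0 // ltW].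
rewrite -mulrA -[X in X <= _]mulr1; apply: ler_wpM2l => //.
rewrite Hx ler_pdivlMr ?exprn_gt0 // mul1r.
rewrite -[X in _ <= X]real_normK ?num_real //.
move: hP; set y := `|_|; nra.
Qed.

Definition bad (R : realFieldType) m n (p : ranking m -> R) (e : R) (P : profile m n) : bool :=
  [exists E : {set ranking m}, e <= `|(cnt P E)%:R - n%:R * pE p E|].

Lemma union_bound (R : realFieldType) m n (p : ranking m -> R) (e : R) :
  (forall r, 0 <= p r) -> \sum_r p r = 1 -> 0 < e ->
  \sum_(P : profile m n | bad p e P) W p P <= #|{set ranking m}|%:R * (n%:R / e ^+ 2).
Proof.
move=> p0 s1 e0.
apply: (@le_trans _ _ (\sum_(E : {set ranking m})
   \sum_(P : profile m n | e <= `|(cnt P E)%:R - n%:R * pE p E|) W p P)).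
  rewrite big_mkcond /= (eq_bigr (fun E => \sum_(P : profile m n)
     if e <= `|(cnt P E)%:R - n%:R * pE p E| then W p P else 0)); last by move=> E _; rewrite big_mkcond.
  rewrite [X in _ <= X]exchange_big /=.
  apply: ler_sum => P _.
  case: ifP => hb; last by apply: sumr_ge0 => E _; case: ifP => // _; exact: W_ge0.
  case/existsP: hb => E0 hE0.
  rewrite (bigD1 E0) //= hE0 lerDl; apply: sumr_ge0 => E _; case: ifP => // _; exact: W_ge0.
rewrite mulr_natl -sumr_const; apply: ler_sum => E _.
exact: cheb.
Qed.

Local Open Scope ring_scope.

Lemma pc_ge0 (R : realType) m (th : R) (r : ranking m) : 0 <= th <= 1 -> 0 <= pc_prob th r.
Proof.
case/andP=> h0 h1; rewrite /pc_prob; apply: addr_ge0.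
  by apply: mulr_ge0 => //; case: (_ == _).
by apply: divr_ge0; rewrite ?subr_ge0 // ler0n.
Qed.

Lemma sum_ind1 m (R : realType) (E : {set ranking m}) :
  \sum_(r in E) ((r == 1%g : nat)%:R : R) = (1%g \in E : nat)%:R.
Proof.
rewrite big_mkcond /= (bigD1 1%g) //= big1 ?addr0; last first.
  by move=> r /negbTE ->; case: (r \in E).
by rewrite eqxx; case: (1%g \in E).
Qed.

Lemma pE_val (R : realType) m (th : R) (E : {set ranking m}) :
  pE (pc_prob th) E = th * (1%g \in E : nat)%:R + (1 - th) * #|E|%:R / (m`!)%:R.
Proof.
rewrite /pE /pc_prob big_split /= -mulr_sumr sum_ind1 sumr_const.
rewrite ?mul1r; congr (_ + _); by rewrite -[_ *+ #|E|]mulr_natr mulrAC.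
Qed.

Lemma pc_sum (R : realType) m (th : R) : \sum_(r : ranking m) pc_prob th r = 1.
Proof.
have := pE_val th [set: ranking m]; rewrite /pE.
rewrite (eq_bigl (fun _ => true)) => [->|r]; last by rewrite inE.
rewrite !inE cardsT card_Sn mulr1 -mulrA divff ?mulr1 ?pnatr_eq0 -?lt0n ?fact_gt0 //.
by rewrite addrC subrK.
Qed.

Lemma frac_card (R : realType) m k x : (0 < k)%N -> (k * x = m`!)%N ->
  (x%:R / (m`!)%:R : R) = 1 / k%:R.
Proof.
move=> k0 h; rewrite -h natrM.
have x0 : (0 < x)%N by move: (fact_gt0 m); rewrite -h muln_gt0 => /andP[].
field; rewrite !pnatr_eq0 -!lt0n ?k0 ?x0 //.
Qed.

Lemma pE_frac (R : realType) m (th : R) (E : {set ranking m}) k :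
  (0 < k)%N -> (k * #|E| = m`!)%N ->
  pE (pc_prob th) E = th * (1%g \in E : nat)%:R + (1 - th) / k%:R.
Proof.
move=> k0 h; rewrite pE_val -mulrA (frac_card R k0 h); by rewrite mul1r.
Qed.

Lemma val0_neq m (o c : 'I_m) : (o : nat) = 0%N -> c != o -> ((c : nat) == 0%N) = false.
Proof. by move=> o0 co; apply/negbTE; apply: contra co => /eqP h; apply/eqP/val_inj; rewrite /= h o0. Qed.


Lemma pv_A (R : realType) m (th : R) (o : 'I_m) : (o : nat) = 0%N ->
  pE (pc_prob th) (sF o) = th + (1 - th) / m%:R.
Proof.
move=> o0; have m0 : (0 < m)%N by apply: leq_ltn_trans (leq0n o) (ltn_ord o).
by rewrite (pE_frac th m0 (card_sF o)) /sF inE perm1 o0 eqxx mulr1.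
Qed.

Lemma pv_F (R : realType) m (th : R) (o c : 'I_m) : (o : nat) = 0%N -> c != o ->
  pE (pc_prob th) (sF c) = (1 - th) / m%:R.
Proof.
move=> o0 co; have m0 : (0 < m)%N by apply: leq_ltn_trans (leq0n o) (ltn_ord o).
by rewrite (pE_frac th m0 (card_sF c)) /sF inE perm1 (val0_neq o0 co) mulr0 add0r.
Qed.

Lemma pv_Lo (R : realType) m (th : R) (o c : 'I_m) : (o : nat) = 0%N -> c != o ->
  pE (pc_prob th) (sL o c) = th + (1 - th) / 2.
Proof.
move=> o0 co; have oc : o != c by rewrite eq_sym.
rewrite (pE_frac th _ (card_sL oc)) // /sL inE !perm1 o0 lt0n.
by rewrite (negbT (val0_neq o0 co)) mulr1.
Qed.

Lemma pv_Lc (R : realType) m (th : R) (o c : 'I_m) : (o : nat) = 0%N -> c != o ->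
  pE (pc_prob th) (sL c o) = (1 - th) / 2.
Proof.
move=> o0 co.
by rewrite (pE_frac th _ (card_sL co)) // /sL inE !perm1 o0 ltn0 mulr0 add0r.
Qed.

Lemma pv_N (R : realType) m (th : R) (y o w : 'I_m) : (o : nat) = 0%N ->
  y != o -> y != w -> o != w ->
  pE (pc_prob th) (sN y o w) = (1 - th) / m%:R / 2.
Proof.
move=> o0 yo yw ow; have m0 : (0 < m)%N by apply: leq_ltn_trans (leq0n o) (ltn_ord o).
rewrite (pE_frac th _ (card_sN yo yw ow)) ?muln_gt0 ?m0 //.
rewrite /sN inE !perm1 (val0_neq o0 yo) /= mulr0 add0r natrM.
field; by rewrite pnatr_eq0 -lt0n.
Qed.

Lemma pv_T (R : realType) m (th : R) (o a b : 'I_m) : (o : nat) = 0%N ->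
  o != a -> a != b -> o != b -> (a < b)%N ->
  pE (pc_prob th) (sT o a b) = (1 - th) / 3.
Proof.
move=> o0 oa ab ob lab.
rewrite sT_sMx (pE_frac th _ (card_sMx oa ab ob)) //.
by rewrite /sMx inE !perm1 (ltnNge b a) (ltnW lab) andbF mulr0 add0r.
Qed.

Local Open Scope ring_scope.

Lemma typ (R : realFieldType) m n (p : ranking m -> R) (e : R) (P : profile m n) (E : {set ranking m}) :
  ~~ bad p e P -> n%:R * pE p E - e < (cnt P E)%:R /\ (cnt P E)%:R < n%:R * pE p E + e.
Proof.
move=> /existsPn /(_ E); rewrite -ltNge ltr_norml => /andP[h1 h2]; split; lra.
Qed.

Lemma good_ii (R : realType) m n (tb : {perm 'I_m}) (th eps : R) (P : profile m n) (o : 'I_m) :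
  (o : nat) = 0%N -> 0 < eps -> 2 * eps <= th ->
  4 * eps <= 2 * (th + (1 - th) / m%:R) - (1 - th) / 2 - (1 - th) / m%:R / 2 ->
  ~~ bad (pc_prob th) (eps * n%:R) P -> ~~ TR_CM tb P.
Proof.
move=> o0 e0 h1 h3 hg.
have n0 : (0 : R) <= n%:R by rewrite ler0n.
have f1 := ler_wpM2r n0 h1; have f3 := ler_wpM2r n0 h3.
apply: (@notCM m n tb P o).
- move=> c co; rewrite -(ltr_nat R).
  have [l1 _] := typ (sF o) hg; have [_ l2] := typ (sF c) hg.
  move: l1 l2; rewrite (pv_A th o0) (pv_F th o0 co); lra.
- move=> c co; rewrite -(ltr_nat R).
  have [l1 _] := typ (sL o c) hg; have [_ l2] := typ (sL c o) hg.
  move: l1 l2; rewrite (pv_Lo th o0 co) (pv_Lc th o0 co); lra.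
- move=> w y wo yo yw; rewrite -(ltr_nat R) natrD natrM.
  have ow : o != w by rewrite eq_sym.
  have [l1 _] := typ (sF o) hg; have [_ l2] := typ (sL w o) hg.
  have [_ l3] := typ (sN y o w) hg.
  move: l1 l2 l3; rewrite (pv_A th o0) (pv_Lc th o0 wo) (pv_N th o0 yo yw ow); lra.
Qed.

Lemma good_i (R : realType) m n (tb : {perm 'I_m}) (th eps : R) (P : profile m n) (o a b : 'I_m) :
  (o : nat) = 0%N -> a != o -> b != o -> a != b -> (a < b)%N ->
  0 < eps -> 2 * eps <= th -> th <= 1 ->
  1 < n%:R * ((1 - th) / 2 + (1 - th) / m%:R / 2 - 2 * (th + (1 - th) / m%:R) - 4 * eps) ->
  2 < n%:R * (1 - 2 * (th + (1 - th) / m%:R) + 2 * ((1 - th) / m%:R / 2) - 2 * ((1 - th) / 3) - 6 * eps) ->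
  ~~ bad (pc_prob th) (eps * n%:R) P -> TR_CM tb P.
Proof.
move=> o0 ao bo ab lab e0 h1 th1 hc hf hg.
have n0 : (0 : R) <= n%:R by rewrite ler0n.
have f1 := ler_wpM2r n0 h1.
have m0 : (0 : R) <= m%:R^-1 by rewrite invr_ge0 ler0n.
have fq : 0 <= n%:R * ((1 - th) / m%:R) by apply: mulr_ge0 => //; apply: mulr_ge0 => //; lra.
have oa : o != a by rewrite eq_sym.
have ob : o != b by rewrite eq_sym.
have ba : b != a by rewrite eq_sym.
have H1 : forall c, c != o -> (cnt P (sF c) < cnt P (sF o))%N.
  move=> c co; rewrite -(ltr_nat R).
  have [l1 _] := typ (sF o) hg; have [_ l2] := typ (sF c) hg.
  move: l1 l2; rewrite (pv_A th o0) (pv_F th o0 co); lra.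
have Hd : (cnt P (sN b o a) <= cnt P (sF o))%N.
  rewrite -(ler_nat R).
  have [l1 _] := typ (sF o) hg; have [_ l2] := typ (sN b o a) hg.
  move: l1 l2; rewrite (pv_A th o0) (pv_N th o0 bo ba oa); lra.
apply: (@CM m n tb P o a b) => //.
- move=> c co; rewrite -(ltr_nat R).
  have [l1 _] := typ (sL o c) hg; have [_ l2] := typ (sL c o) hg.
  move: l1 l2; rewrite (pv_Lo th o0 co) (pv_Lc th o0 co); lra.
- move=> c ca cb; case: (eqVneq c o) => [->//|co]; exact: ltnW (H1 c co).
  rewrite -(ltr_nat R) ?natrM !natrD.
  have [_ l1] := typ (sF o) hg; have [l2 _] := typ (sL a o) hg.
  have [l3 _] := typ (sN b o a) hg.
  move: l1 l2 l3; rewrite (pv_A th o0) (pv_Lc th o0 ao) (pv_N th o0 bo ba oa); lra.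
- rewrite -(ltr_nat R) ?natrM !natrD natrB //.
  have [_ l1] := typ (sF o) hg; have [l2 _] := typ (sN b o a) hg.
  have [_ l3] := typ (sT o a b) hg.
  move: l1 l2 l3; rewrite (pv_A th o0) (pv_N th o0 bo ba oa) (pv_T th o0 oa ab ob lab); lra.
Qed.

Local Open Scope classical_set_scope.
Local Open Scope ring_scope.

Lemma lim_bound (R : realType) (f : nat -> R) (y C K : R) :
  0 <= C -> 0 <= K -> (forall n : nat, K < n%:R -> `|y - f n| <= C / n%:R) ->
  f @ \oo --> y.
Proof.
move=> C0 K0 H; apply/cvgrPdist_le => eps eps0.
near=> n.
have h1 : K < n%:R by near: n; exact: nbhs_infty_gtr.
have h2 : C / eps < n%:R by near: n; exact: nbhs_infty_gtr.
apply: le_trans (H n h1) _.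
have n0' : (0 : R) < n%:R by lra.
rewrite ler_pdivrMr // ; rewrite ltr_pdivrMr // in h2; nra.
Unshelve. all: by end_near.
Qed.

Lemma le_sub_sum (R : realFieldType) (T : finType) (F : T -> R) (A B : pred T) :
  (forall x, 0 <= F x) -> (forall x, A x -> B x) ->
  \sum_(x | A x) F x <= \sum_(x | B x) F x.
Proof.
move=> F0 AB; rewrite [X in X <= _]big_mkcond [X in _ <= X]big_mkcond /=.
apply: ler_sum => x _; case: ifP => hA; first by rewrite (AB x hA).
by case: ifP.
Qed.

Unset Implicit Arguments.

Theorem theorem4p3 (R : realType) (m : nat) (tb : {perm 'I_m}) (theta : R) :
  (3 <= m)%N -> 0 < theta -> theta <= 1 ->
  (theta < theta_c_TR R m -> (fun n : nat => rho_TR n tb theta) @ \oo --> (1 : R)) /\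
  (theta_c_TR R m < theta -> (fun n : nat => rho_TR n tb theta) @ \oo --> (0 : R)).
Proof.
move=> m3 th0 th1.
have m0 : (0 < m)%N by lia.
have m1 : (1 < m)%N by lia.
have m2 : (2 < m)%N by lia.
pose o := Ordinal m0; pose a := Ordinal m1; pose b := Ordinal m2.
have o0 : (o : nat) = 0%N by [].
have ao : a != o by [].
have bo : b != o by [].
have ab : a != b by [].
have lab : (a < b)%N by [].
pose p := pc_prob theta (m := m).
have p0 r : 0 <= p r by apply: pc_ge0; rewrite th1 ltW.
have s1 : \sum_r p r = 1 by apply: pc_sum.
pose K0 := (#|{set ranking m}|%:R : R).
have K00 : 0 <= K0 by rewrite ler0n.
have badb n eps : 0 < eps -> (0 < n)%N ->
    \sum_(P : profile m n | bad p (eps * n%:R) P) W p P <= K0 / eps ^+ 2 / n%:R.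
  move=> e0 n0; have nR : (0 : R) < n%:R by rewrite ltr0n.
  apply: le_trans (union_bound n p0 s1 (mulr_gt0 e0 nR)) _.
  rewrite le_eqVlt; apply/orP; left; apply/eqP; rewrite /K0; field.
  by apply/andP; split; rewrite ?pnatr_eq0 -?lt0n ?gt_eqF.
have rhoE n : rho_TR n tb theta = \sum_(P : profile m n | TR_CM tb P) W p P by [].
have tot n : \sum_(P : profile m n | TR_CM tb P) W p P + \sum_(P : profile m n | ~~ TR_CM tb P) W p P = 1.
  by have := sumW1 n s1; rewrite (bigID (fun P => TR_CM tb P)) /=.
have W0 n (P : profile m n) : 0 <= W p P by apply: W_ge0.
have mR : (3 : R) <= m%:R by rewrite (ler_nat R 3 m).
have mR0 : (m%:R : R) != 0 by rewrite pnatr_eq0 -lt0n.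
have hG3 : 2 * (theta + (1 - theta) / m%:R) - (1 - theta) / 2 - (1 - theta) / m%:R / 2 =
    (theta * (5 * m%:R - 3) - (m%:R - 3)) / (2 * m%:R).
  by field; rewrite mR0 /=.
have d5 : (0 : R) < 5 * m%:R - 3 by lra.
split => hth.
- have h5 : theta * (5 * m%:R - 3) < m%:R - 3.
    by move: hth; rewrite /theta_c_TR ltr_pdivlMr.
  pose G3' := (1 - theta) / 2 + (1 - theta) / m%:R / 2 - 2 * (theta + (1 - theta) / m%:R).
  have eG3 : G3' = ((m%:R - 3) - theta * (5 * m%:R - 3)) / (2 * m%:R).
    by rewrite /G3'; field; rewrite mR0.
  pose Gf := 1 - 2 * (theta + (1 - theta) / m%:R) + 2 * ((1 - theta) / m%:R / 2) - 2 * ((1 - theta) / 3).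
  have eGf : Gf = ((m%:R - 3) - theta * (4 * m%:R - 3)) / (3 * m%:R).
    by rewrite /Gf; field; rewrite mR0.
  have G3p : 0 < G3' by rewrite eG3; apply: divr_gt0; lra.
  have Gfp : 0 < Gf by rewrite eGf; apply: divr_gt0; nra.
  pose g := Num.min theta (Num.min G3' Gf).
  have gp : 0 < g by rewrite !lt_min th0 G3p Gfp.
  have g1 : g <= theta by rewrite ge_min lexx.
  have g2 : g <= G3' by rewrite ge_min ge_min lexx orbT.
  have g3 : g <= Gf by rewrite ge_min ge_min lexx !orbT.
  pose eps := g / 16.
  have e0 : 0 < eps by rewrite /eps; lra.
  apply: (@lim_bound R _ _ (K0 / eps ^+ 2) (4 / g)).
  + by apply: divr_ge0 => //; apply: exprn_ge0; apply: ltW.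
  + by apply: divr_ge0; lra.
  move=> n hn.
  have nR : (0 : R) < n%:R by apply: lt_trans hn; apply: divr_gt0; lra.
  have n0 : (0 < n)%N by rewrite -(ltr_nat R).
  have ng : 4 < n%:R * g by rewrite -ltr_pdivrMr.
  have f2 := ler_wpM2l (ltW nR) g2; have f3 := ler_wpM2l (ltW nR) g3.
  have hc : 1 < n%:R * (G3' - 4 * eps) by rewrite /eps; lra.
  have hf : 2 < n%:R * (Gf - 6 * eps) by rewrite /eps; lra.
  have h2e : 2 * eps <= theta by rewrite /eps; lra.
  rewrite rhoE.
  have -> : 1 - \sum_(P : profile m n | TR_CM tb P) W p P = \sum_(P : profile m n | ~~ TR_CM tb P) W p P.
    by have := tot n; lra.
  rewrite ger0_norm; last by apply: sumr_ge0.
  apply: le_trans (badb n eps e0 n0).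
  apply: le_sub_sum => // P hP.
  case: (boolP (bad p (eps * n%:R) P)) => // hb.
  by move: hP; rewrite (good_i tb o0 ao bo ab lab e0 h2e th1 hc hf hb).
- have h5 : m%:R - 3 < theta * (5 * m%:R - 3).
    by move: hth; rewrite /theta_c_TR ltr_pdivrMr.
  pose G3 := 2 * (theta + (1 - theta) / m%:R) - (1 - theta) / 2 - (1 - theta) / m%:R / 2.
  have G3p : 0 < G3 by rewrite /G3 hG3; apply: divr_gt0; lra.
  pose g := Num.min theta G3.
  have gp : 0 < g by rewrite !lt_min th0 G3p.
  have g1 : g <= theta by rewrite ge_min lexx.
  have g2 : g <= G3 by rewrite ge_min lexx orbT.
  pose eps := g / 8.
  have e0 : 0 < eps by rewrite /eps; lra.
  have h2e : 2 * eps <= theta by rewrite /eps; lra.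
  have h4e : 4 * eps <= G3 by rewrite /eps; lra.
  apply: (@lim_bound R _ _ (K0 / eps ^+ 2) 0).
  + by apply: divr_ge0 => //; apply: exprn_ge0; apply: ltW.
  + by [].
  move=> n hn.
  have n0 : (0 < n)%N by rewrite -(ltr_nat R).
  rewrite rhoE sub0r normrN ger0_norm; last by apply: sumr_ge0.
  apply: le_trans (badb n eps e0 n0).
  apply: le_sub_sum => // P hP.
  case: (boolP (bad p (eps * n%:R) P)) => // hb.
  by move: hP; rewrite (negbTE (good_ii tb o0 e0 h2e h4e hb)).
Qed.
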